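(* Let $T$ be a measure-preserving transformation of a finite measure space $(X,\mu)$ and let $\{K_n\}_{n\ge1}$ be measurable subsets of $X$ with $\sum_{n=1}^\infty\mu(X\setminus K_n)<\infty$. Then there is a full measure subset $\Omega\subseteq X$ such that for any $x,y\in\Omega$ there exist $n\in\mathbb N$ and a sequence $n_k\to\infty$ with $T^{n_k}(x)\in K_n$ and $T^{n_k}(y)\in K_n$ for every $k$. *)

(* Defs.v *)
From Stdlib Require Import Reals.
Open Scope R_scope.

Definition compl {X : Type} (A : X -> Prop) : X -> Prop := fun x => ~ A x.
Definition preimage {X : Type} (T : X -> X) (A : X -> Prop) : X -> Prop :=
  fun x => A (T x).
Definition bigcup {X : Type} (A : nat -> X -> Prop) : X -> Prop :=
  fun x => exists n, A n x.

Record FiniteMeasureSpace (X : Type) := {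
  measurable : (X -> Prop) -> Prop;
  mu : (X -> Prop) -> R;
  measurable_full : measurable (fun _ => True);
  measurable_compl : forall A, measurable A -> measurable (compl A);
  measurable_bigcup : forall A : nat -> X -> Prop,
      (forall n, measurable (A n)) -> measurable (bigcup A);
  mu_ge0 : forall A, measurable A -> 0 <= mu A;
  mu_empty : mu (fun _ => False) = 0;
  mu_sigma_additive : forall A : nat -> X -> Prop,
      (forall n, measurable (A n)) ->
      (forall n m x, n <> m -> A n x -> A m x -> False) ->
      infinite_sum (fun n => mu (A n)) (mu (bigcup A))
}.
Arguments measurable {X} _ _.
Arguments mu {X} _ _.

Definition measure_preserving {X : Type} (M : FiniteMeasureSpace X)
  (T : X -> X) : Prop :=
  forall A, measurable M A ->
    measurable M (preimage T A) /\ mu M (preimage T A) = mu M A.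

Definition full_measure {X : Type} (M : FiniteMeasureSpace X)
  (Om : X -> Prop) : Prop :=
  measurable M Om /\ mu M (compl Om) = 0.

(* Main.v *)
Require Import Defs.
From Stdlib Require Import Reals Lra Lia List Classical ClassicalDescription ClassicalEpsilon
  FunctionalExtensionality PropExtensionality.
Open Scope R_scope.

Lemma set_ext {X : Type} (A B : X -> Prop) : (forall x, A x <-> B x) -> A = B.
Proof. intros H; apply functional_extensionality; intros x;
  apply propositional_extensionality; apply H. Qed.

Definition empty {X : Type} : X -> Prop := fun _ => False.
Definition union {X : Type} (A B : X -> Prop) : X -> Prop := fun x => A x \/ B x.
Definition seq2 {X : Type} (A B : X -> Prop) (n : nat) : X -> Prop :=
  match n with 0%nat => A | 1%nat => B | _ => empty end.

Lemma meas_empty {X} (M : FiniteMeasureSpace X) : measurable M empty.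
Proof.
  replace (@empty X) with (compl (fun _ : X => True)).
  - apply measurable_compl, measurable_full.
  - apply set_ext; unfold compl, empty; tauto.
Qed.

Lemma mu_empty' {X} (M : FiniteMeasureSpace X) : mu M empty = 0.
Proof. apply mu_empty. Qed.

Lemma meas_union {X} (M : FiniteMeasureSpace X) A B :
  measurable M A -> measurable M B -> measurable M (union A B).
Proof.
  intros HA HB.
  replace (union A B) with (bigcup (seq2 A B)).
  - apply measurable_bigcup. intros [|[|n]]; simpl; auto. apply meas_empty.
  - apply set_ext; intros x; unfold bigcup, union; split.
    + intros [[|[|n]] H]; simpl in H; auto. destruct H.
    + intros [H|H]; [exists 0%nat|exists 1%nat]; exact H.
Qed.

Lemma compl_compl {X} (A : X -> Prop) : compl (compl A) = A.
Proof. apply set_ext; unfold compl; intros; tauto. Qed.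

Definition inter {X : Type} (A B : X -> Prop) : X -> Prop := fun x => A x /\ B x.

Lemma meas_inter {X} (M : FiniteMeasureSpace X) A B :
  measurable M A -> measurable M B -> measurable M (inter A B).
Proof.
  intros HA HB.
  replace (inter A B) with (compl (union (compl A) (compl B))).
  - apply measurable_compl, meas_union; apply measurable_compl; auto.
  - apply set_ext; unfold compl, union, inter; intros; tauto.
Qed.

Lemma meas_ext {X} (M : FiniteMeasureSpace X) (A B : X -> Prop) :
  (forall x, A x <-> B x) -> measurable M A -> measurable M B.
Proof. intros H; rewrite (set_ext _ _ H); auto. Qed.

Lemma mu_ext {X} (M : FiniteMeasureSpace X) (A B : X -> Prop) :
  (forall x, A x <-> B x) -> mu M A = mu M B.
Proof. intros H; rewrite (set_ext _ _ H); auto. Qed.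

Lemma meas_and_const {X} (M : FiniteMeasureSpace X) (Q : Prop) A :
  measurable M A -> measurable M (fun x => Q /\ A x).
Proof.
  intros HA; destruct (classic Q) as [q|q].
  - apply (meas_ext M A); auto; intros; tauto.
  - apply (meas_ext M empty); [|apply meas_empty]; unfold empty; intros; tauto.
Qed.

Lemma mu_union_disj {X} (M : FiniteMeasureSpace X) A B :
  measurable M A -> measurable M B -> (forall x, A x -> B x -> False) ->
  mu M (union A B) = mu M A + mu M B.
Proof.
  intros HA HB Hd.
  assert (Hs := mu_sigma_additive _ M (seq2 A B)).
  assert (Hu : bigcup (seq2 A B) = union A B).
  { apply set_ext; intros x; unfold bigcup, union; split.
    + intros [[|[|n]] H]; simpl in H; auto. destruct H.
    + intros [H|H]; [exists 0%nat|exists 1%nat]; exact H. }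
  rewrite Hu in Hs.
  eapply uniqueness_sum; [apply Hs|].
  - intros [|[|n]]; simpl; auto; apply meas_empty.
  - intros [|[|n]] [|[|m]] x Hnm H1 H2; simpl in *; try lia; eauto;
      try destruct H1; try destruct H2.
  - intros eps Heps. exists 1%nat. intros n Hn.
    assert (E : forall n, (1 <= n)%nat ->
      sum_f_R0 (fun n => mu M (seq2 A B n)) n = mu M A + mu M B).
    { induction n0 as [|n0 IH]; intros Hn0; [lia|].
      destruct n0 as [|n0]; [simpl; ring|].
      rewrite tech5, IH by lia. simpl. rewrite mu_empty. ring. }
    rewrite E by lia. unfold R_dist. rewrite Rminus_diag, Rabs_R0. lra.
Qed.

Lemma mu_mono {X} (M : FiniteMeasureSpace X) A B :
  measurable M A -> measurable M B -> (forall x, A x -> B x) -> mu M A <= mu M B.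
Proof.
  intros HA HB Hs.
  assert (Hd : measurable M (inter B (compl A))) by
    (apply meas_inter; auto; apply measurable_compl; auto).
  replace B with (union A (inter B (compl A))).
  - rewrite mu_union_disj; auto.
    + assert (0 <= mu M (inter B (compl A))) by (apply mu_ge0; auto). lra.
    + unfold inter, compl; intros x h1 [h2 h3]; auto.
  - apply set_ext; unfold union, inter, compl; intros x; split.
    + intros [h|[h _]]; auto.
    + intros h; destruct (classic (A x)); auto.
Qed.

Lemma mu_union_le {X} (M : FiniteMeasureSpace X) A B :
  measurable M A -> measurable M B -> mu M (union A B) <= mu M A + mu M B.
Proof.
  intros HA HB.
  assert (Hd : measurable M (inter B (compl A))) by
    (apply meas_inter; auto; apply measurable_compl; auto).
  replace (union A B) with (union A (inter B (compl A))).
  - rewrite mu_union_disj; auto.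
    + enough (mu M (inter B (compl A)) <= mu M B) by lra.
      apply mu_mono; auto. intros x [h _]; auto.
    + unfold inter, compl; intros x h1 [h2 h3]; auto.
  - apply set_ext; unfold union, inter, compl; intros x; split.
    + intros [h|[h _]]; auto.
    + intros [h|h]; auto. destruct (classic (A x)); auto.
Qed.

Fixpoint sumR (g : nat -> R) (n : nat) : R :=
  match n with 0%nat => 0 | S n => sumR g n + g n end.

Lemma sumR_f_R0 g n : sum_f_R0 g n = sumR g (S n).
Proof. induction n; simpl in *; [ring|]. rewrite IHn; simpl; ring. Qed.

Lemma sumR_le g h n : (forall i, (i < n)%nat -> g i <= h i) -> sumR g n <= sumR h n.
Proof. induction n; simpl; intros H; [lra|].
  assert (g n <= h n) by (apply H; lia). assert (sumR g n <= sumR h n) by (apply IHn; intros; apply H; lia). lra. Qed.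

Lemma sumR_ge0 g n : (forall i, 0 <= g i) -> 0 <= sumR g n.
Proof. induction n; simpl; intros H; [lra|]. specialize (IHn H). specialize (H n). lra. Qed.

Lemma sumR_add g n m : sumR g (n + m) = sumR g n + sumR (fun j => g (n + j)%nat) m.
Proof. induction m; simpl. rewrite Nat.add_0_r; ring. rewrite Nat.add_succ_r; simpl; rewrite IHm; ring. Qed.

Lemma sumR_scal c g n : sumR (fun i => c * g i) n = c * sumR g n.
Proof. induction n; simpl; [ring|]. rewrite IHn; ring. Qed.

Lemma lim_le g l c : infinite_sum g l -> (forall n, sum_f_R0 g n <= c) -> l <= c.
Proof.
  intros Hl Hc. destruct (Rle_dec l c) as [h|h]; auto. exfalso.
  destruct (Hl (l - c)) as [N HN]; [lra|].
  specialize (HN N (le_n _)). specialize (Hc N). unfold R_dist in HN.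
  apply Rabs_def2 in HN. lra.
Qed.

Lemma partial_le g l n : infinite_sum g l -> (forall i, 0 <= g i) -> sumR g n <= l.
Proof.
  intros Hl Hg. destruct (Rle_dec (sumR g n) l) as [h|h]; auto. exfalso.
  destruct (Hl (sumR g n - l)) as [N HN]; [lra|].
  specialize (HN (N + n)%nat ltac:(lia)). unfold R_dist in HN.
  apply Rabs_def2 in HN. rewrite sumR_f_R0 in HN.
  replace (S (N + n)) with (n + S N)%nat in HN by lia. rewrite sumR_add in HN.
  assert (0 <= sumR (fun j => g (n + j)%nat) (S N)) by (apply sumR_ge0; auto). lra.
Qed.

Definition fu {X : Type} (A : nat -> X -> Prop) (N : nat) : X -> Prop :=
  fun x => exists i, (i < N)%nat /\ A i x.

Lemma meas_fu {X} (M : FiniteMeasureSpace X) A N :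
  (forall n, measurable M (A n)) -> measurable M (fu A N).
Proof.
  intros HA. apply (meas_ext M (bigcup (fun i x => (i < N)%nat /\ A i x))).
  - unfold bigcup, fu; intros; tauto.
  - apply measurable_bigcup; intros; apply meas_and_const; auto.
Qed.

Lemma mu_fu_le {X} (M : FiniteMeasureSpace X) A N :
  (forall n, measurable M (A n)) -> mu M (fu A N) <= sumR (fun i => mu M (A i)) N.
Proof.
  intros HA. induction N; simpl.
  - rewrite (mu_ext M _ empty); [rewrite mu_empty'; lra|].
    unfold fu, empty; intros x; split; [intros [i [h _]]; lia|tauto].
  - rewrite (mu_ext M _ (union (fu A N) (A N))).
    + eapply Rle_trans; [apply mu_union_le; auto; apply meas_fu; auto|]. lra.
    + unfold fu, union; intros x; split.
      * intros [i [hi h]]. destruct (Nat.eq_dec i N); [subst; auto|left; exists i; split; auto; lia].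
      * intros [[i [hi h]]|h]; [exists i; split; auto|exists N; split; auto].
Qed.

Lemma mu_bigcup_le {X} (M : FiniteMeasureSpace X) A c :
  (forall n, measurable M (A n)) -> (forall N, mu M (fu A N) <= c) ->
  mu M (bigcup A) <= c.
Proof.
  intros HA Hc.
  set (D := fun i x => A i x /\ ~ fu A i x).
  assert (HD : forall n, measurable M (D n)).
  { intros n. apply meas_inter; auto. apply measurable_compl, meas_fu; auto. }
  assert (Hs := mu_sigma_additive _ M D HD).
  assert (Hu : bigcup D = bigcup A).
  { apply set_ext; intros x; unfold bigcup; split.
    - intros [i [h _]]; eauto.
    - intros [i h]. revert h. induction i as [i IH] using (well_founded_induction Wf_nat.lt_wf). intros h.
      destruct (classic (fu A i x)) as [[j [hj hj']]|hn].
      + exact (IH j hj hj').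
      + exists i; split; auto. }
  assert (Hp : forall N, sumR (fun i => mu M (D i)) N = mu M (fu A N)).
  { induction N; simpl.
    - symmetry. rewrite (mu_ext M _ empty); [apply mu_empty'|].
      unfold fu, empty; intros x; split; [intros [i [h _]]; lia|tauto].
    - rewrite IHN. rewrite <- (mu_union_disj M (fu A N) (D N)).
      + apply mu_ext. unfold fu, union, D; intros x; split.
        * intros [[i [hi h]]|[h _]]; [exists i; split; auto|exists N; split; auto].
        * intros [i [hi h]]. destruct (classic (exists i, (i < N)%nat /\ A i x)) as [H|H]; auto.
          right; split; auto. destruct (Nat.eq_dec i N); [subst; auto|].
          exfalso; apply H; exists i; split; auto; lia.
      + apply meas_fu; auto.
      + auto.
      + unfold D; intros x h [_ h']; auto. }
  rewrite Hu in Hs. eapply lim_le; [apply Hs|].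
  - intros i j x hij h1 h2. unfold D in *. destruct h1 as [h1 n1], h2 as [h2 n2].
    destruct (Nat.lt_ge_cases i j); [apply n2; exists i; split; auto|apply n1; exists j; split; auto; lia].
  - intros n. rewrite sumR_f_R0, Hp. auto.
Qed.

Definition indic {X : Type} (A : X -> Prop) (x : X) : nat :=
  if excluded_middle_informative (A x) then 1%nat else 0%nat.

Lemma ind_spec {X} (A : X -> Prop) x :
  (A x /\ indic A x = 1%nat) \/ (~ A x /\ indic A x = 0%nat).
Proof. unfold indic; destruct (excluded_middle_informative (A x)); auto. Qed.

Lemma ind_le1 {X} (A : X -> Prop) x : (indic A x <= 1)%nat.
Proof. destruct (ind_spec A x) as [[_ h]|[_ h]]; lia. Qed.

Definition cnt {X : Type} (l : list (X -> Prop)) (x : X) : nat :=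
  fold_right (fun A acc => (indic A x + acc)%nat) 0%nat l.
Definition Imu {X : Type} (M : FiniteMeasureSpace X) (l : list (X -> Prop)) : R :=
  fold_right (fun A acc => mu M A + acc) 0 l.

Lemma cnt_le_len {X} (l : list (X -> Prop)) x : (cnt l x <= length l)%nat.
Proof. induction l; simpl; auto. pose proof (ind_le1 a x). lia. Qed.

Lemma cnt_app {X} (l1 l2 : list (X -> Prop)) x : cnt (l1 ++ l2) x = (cnt l1 x + cnt l2 x)%nat.
Proof. induction l1; simpl; auto. unfold cnt in *; simpl. rewrite IHl1. lia. Qed.

Lemma Imu_app {X} (M : FiniteMeasureSpace X) l1 l2 : Imu M (l1 ++ l2) = Imu M l1 + Imu M l2.
Proof. induction l1; simpl; [ring|]. unfold Imu in *; simpl. rewrite IHl1. ring. Qed.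

Lemma meas_cnt {X} (M : FiniteMeasureSpace X) l :
  Forall (measurable M) l -> forall P : nat -> Prop, measurable M (fun x => P (cnt l x)).
Proof.
  induction 1 as [|A l HA Hl IH]; intros P.
  - simpl. destruct (classic (P 0%nat)) as [h|h].
    + apply (meas_ext M (fun _ => True)); [intros; tauto|apply measurable_full].
    + apply (meas_ext M empty); [unfold empty; intros; tauto|apply meas_empty].
  - apply (meas_ext M (union (inter A (fun x => P (S (cnt l x))))
                            (inter (compl A) (fun x => P (cnt l x))))).
    + intros x; unfold union, inter, compl; simpl.
      destruct (ind_spec A x) as [[h e]|[h e]]; rewrite e; simpl; tauto.
    + apply meas_union; apply meas_inter.
      * exact HA.
      * exact (IH (fun c => P (S c))).
      * apply measurable_compl; exact HA.
      * exact (IH P).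
Qed.

Lemma sumR_ext g h n : (forall i, g i = h i) -> sumR g n = sumR h n.
Proof. intros H; induction n; simpl; auto. rewrite IHn, H; auto. Qed.

Lemma sumR_plus g h n : sumR (fun i => g i + h i) n = sumR g n + sumR h n.
Proof. induction n; simpl; [ring|]. rewrite IHn; ring. Qed.

Lemma layer {X} (M : FiniteMeasureSpace X) l :
  Forall (measurable M) l -> forall B, (length l <= B)%nat ->
  Imu M l = sumR (fun m => mu M (fun x => (S m <= cnt l x)%nat)) B.
Proof.
  induction 1 as [|A l HA Hl IH]; intros B HB.
  - simpl. rewrite (sumR_ext _ (fun _ => 0)).
    + clear; induction B; simpl; auto. rewrite <- IHB; ring.
    + intros i. rewrite (mu_ext M _ empty); [apply mu_empty'|]. unfold empty; simpl; intros; lia.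
  - simpl in HB. unfold Imu; simpl; fold (Imu M l).
    rewrite (IH B) by lia.
    rewrite (sumR_ext (fun m => mu M (fun x => (S m <= indic A x + cnt l x)%nat)) (fun m => mu M (fun x => (S m <= cnt l x)%nat) +
                                  mu M (fun x => A x /\ cnt l x = m))).
    + rewrite sumR_plus.
      assert (E : forall B, sumR (fun m => mu M (fun x => A x /\ cnt l x = m)) B
                 = mu M (fun x => A x /\ (cnt l x < B)%nat)).
      { induction B0; simpl.
        - rewrite (mu_ext M _ empty); [rewrite mu_empty'; auto|]. unfold empty; intros; lia.
        - rewrite IHB0. rewrite <- mu_union_disj.
          + apply mu_ext; unfold union; intros x; split.
            * intros [[h1 h2]|[h1 h2]]; split; auto; lia.
            * intros [h1 h2]; destruct (Nat.eq_dec (cnt l x) B0); [right|left]; split; auto; lia.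
          + apply meas_inter; auto. apply (meas_cnt M l Hl (fun c => c < B0)%nat).
          + apply meas_inter; auto. apply (meas_cnt M l Hl (fun c => c = B0)).
          + intros x [_ h1] [_ h2]; lia. }
      rewrite E. rewrite (mu_ext M (fun x => A x /\ (cnt l x < B)%nat) A); [ring|].
      intros x; pose proof (cnt_le_len l x); split; [tauto|intros; split; auto; lia].
    + intros m. rewrite <- mu_union_disj.
      * apply mu_ext; unfold union. intros x.
        destruct (ind_spec A x) as [[h e]|[h e]]; rewrite e; split.
        -- intros h1. destruct (Nat.eq_dec (cnt l x) m); [right; split; auto|left; lia].
        -- intros [h1|[h1 h2]]; lia.
        -- intros h1; left; lia.
        -- intros [h1|[h1 h2]]; [lia|tauto].
      * apply (meas_cnt M l Hl (fun c => S m <= c)%nat).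
      * apply meas_inter; auto. apply (meas_cnt M l Hl (fun c => c = m)).
      * intros x h1 [_ h2]; lia.
Qed.

Lemma compare {X} (M : FiniteMeasureSpace X) l1 l2 :
  Forall (measurable M) l1 -> Forall (measurable M) l2 ->
  (forall x, (cnt l1 x <= cnt l2 x)%nat) -> Imu M l1 <= Imu M l2.
Proof.
  intros H1 H2 Hc.
  rewrite (layer M l1 H1 (length l1 + length l2)) by lia.
  rewrite (layer M l2 H2 (length l1 + length l2)) by lia.
  apply sumR_le; intros i _. apply mu_mono.
  - apply (meas_cnt M l1 H1 (fun c => S i <= c)%nat).
  - apply (meas_cnt M l2 H2 (fun c => S i <= c)%nat).
  - intros x h; specialize (Hc x); lia.
Qed.

Fixpoint sumN (g : nat -> nat) (s n : nat) : nat :=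
  match n with 0%nat => 0%nat | S n => (g s + sumN g (S s) n)%nat end.

Lemma sumN_split g s n m : sumN g s (n + m) = (sumN g s n + sumN g (s + n) m)%nat.
Proof. revert s; induction n; intros s; simpl. rewrite Nat.add_0_r; auto.
  rewrite IHn. replace (S s + n)%nat with (s + S n)%nat by lia. lia. Qed.

Lemma sumN_mono_len g s n m : (n <= m)%nat -> (sumN g s n <= sumN g s m)%nat.
Proof. intros H. replace m with (n + (m - n))%nat by lia. rewrite sumN_split. lia. Qed.

Lemma sumN_ext g h s n : (forall i, g i = h i) -> sumN g s n = sumN h s n.
Proof. intros H; revert s; induction n; intros s; simpl; auto. Qed.

Lemma sumN_le_len g s n : (forall i, (g i <= 1)%nat) -> (sumN g s n <= n)%nat.
Proof. intros H; revert s; induction n; intros s; simpl; auto. specialize (H s). specialize (IHn (S s)). lia. Qed.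

Lemma sumN_shift g j s n : sumN (fun i => g (i + j)%nat) s n = sumN g (s + j) n.
Proof. revert s; induction n; intros s; simpl; auto. Qed.

Lemma sumN_plus g h s n : sumN (fun i => g i + h i)%nat s n = (sumN g s n + sumN h s n)%nat.
Proof. revert s; induction n; intros s; simpl; auto. rewrite IHn. lia. Qed.

Lemma sumN_ge g s n : (forall j, (s <= j)%nat -> (1 <= g j)%nat) -> (n <= sumN g s n)%nat.
Proof. revert s; induction n; intros s H; simpl; auto.
  assert (1 <= g s)%nat by (apply H; lia). assert (n <= sumN g (S s) n)%nat by (apply IHn; intros; apply H; lia). lia. Qed.

Lemma cover (e a : nat -> nat) L :
  (forall j, (e j <= 1)%nat) ->
  (forall j, e j <> 0%nat -> exists N, (1 <= N <= L)%nat /\ (N <= 3 * sumN a j N)%nat) ->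
  forall n s, (sumN e s n <= 3 * sumN a s (n + L))%nat.
Proof.
  intros He Ha n. induction n as [n IH] using (well_founded_induction Wf_nat.lt_wf).
  intros s. destruct n as [|k]; simpl; [lia|].
  destruct (Nat.eq_dec (e s) 0) as [h|h].
  - specialize (IH k ltac:(lia) (S s)). rewrite h. lia.
  - destruct (Ha s h) as [N [HN1 HN2]].
    destruct (Nat.le_gt_cases (S k) N) as [hk|hk].
    + pose proof (sumN_le_len e (S s) k He).
      pose proof (sumN_mono_len a s N (S k + L) ltac:(lia)). simpl in H0. pose proof (He s). lia.
    + change (e s + sumN e (S s) k)%nat with (sumN e s (S k)).
      replace (S k) with (N + (S k - N))%nat by lia.
      rewrite sumN_split.
      specialize (IH (S k - N)%nat ltac:(lia) (s + N)%nat).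
      replace (N + (S k - N) + L)%nat with (N + (S k - N + L))%nat by lia.
      assert (E : (a s + sumN a (S s) (k + L))%nat = (sumN a s N + sumN a (s+N) (S k - N + L))%nat).
      { change (a s + sumN a (S s) (k + L))%nat with (sumN a s (S (k + L))).
        rewrite <- sumN_split. f_equal. lia. }
      rewrite E. pose proof (sumN_le_len e s N He). lia.
Qed.

Definition pre {X : Type} (T : X -> X) (j : nat) (A : X -> Prop) : X -> Prop :=
  fun x => A (Nat.iter j T x).

Lemma pre_meas {X} (M : FiniteMeasureSpace X) T (HT : measure_preserving M T) j :
  forall A, measurable M A -> measurable M (pre T j A) /\ mu M (pre T j A) = mu M A.
Proof.
  induction j; intros A HA; [split; auto|].
  destruct (HT A HA) as [h1 h2]. destruct (IHj _ h1) as [h3 h4].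
  change (pre T (S j) A) with (pre T j (preimage T A)). split; auto. rewrite h4; auto.
Qed.

Definition cntT {X : Type} (T : X -> X) (A : X -> Prop) (y : X) (N : nat) : nat :=
  sumN (fun i => indic A (Nat.iter i T y)) 0 N.

Lemma cnt_map {X} (T : X -> X) B s n x :
  cnt (map (fun j => pre T j B) (seq s n)) x = sumN (fun j => indic B (Nat.iter j T x)) s n.
Proof. revert s; induction n; intros s; simpl; auto. Qed.

Lemma Imu_map {X} (M : FiniteMeasureSpace X) T (HT : measure_preserving M T) B s n :
  measurable M B -> Imu M (map (fun j => pre T j B) (seq s n)) = INR n * mu M B.
Proof. intros HB; revert s; induction n; intros s; simpl; [ring|].
  unfold Imu in *; simpl. rewrite IHn. rewrite (proj2 (pre_meas M T HT s B HB)).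
  destruct n; simpl; ring. Qed.

Lemma Forall_map_meas {X} (M : FiniteMeasureSpace X) T (HT : measure_preserving M T) B s n :
  measurable M B -> Forall (measurable M) (map (fun j => pre T j B) (seq s n)).
Proof. intros HB. apply Forall_forall. intros C HC. apply in_map_iff in HC.
  destruct HC as [j [<- _]]. apply pre_meas; auto. Qed.

Definition Fset {X : Type} (T : X -> X) (A : X -> Prop) (N : nat) (y : X) : Prop :=
  (1 <= N)%nat /\ (N <= 3 * cntT T A y N)%nat.
Definition EL {X : Type} (T : X -> X) (A : X -> Prop) (L : nat) (y : X) : Prop :=
  exists N, (N <= L)%nat /\ Fset T A N y.
Definition Ebig {X : Type} (T : X -> X) (A : X -> Prop) : X -> Prop := bigcup (Fset T A).

Lemma meas_Fset {X} (M : FiniteMeasureSpace X) T (HT : measure_preserving M T) A N :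
  measurable M A -> measurable M (Fset T A N).
Proof.
  intros HA.
  apply (meas_ext M (fun y => (fun c => (1 <= N)%nat /\ (N <= 3 * c)%nat)
                     (cnt (map (fun j => pre T j A) (seq 0 N)) y))).
  - intros y. rewrite cnt_map. unfold Fset, cntT. tauto.
  - apply (meas_cnt M _ (Forall_map_meas M T HT A 0 N HA) (fun c => (1 <= N)%nat /\ (N <= 3 * c)%nat)).
Qed.

Lemma meas_EL {X} (M : FiniteMeasureSpace X) T (HT : measure_preserving M T) A L :
  measurable M A -> measurable M (EL T A L).
Proof.
  intros HA. apply (meas_ext M (bigcup (fun N y => (N <= L)%nat /\ Fset T A N y))).
  - unfold bigcup, EL; tauto.
  - apply measurable_bigcup; intros N. apply meas_and_const, meas_Fset; auto.
Qed.

Lemma iter_add' {X} (T : X -> X) i j x : Nat.iter i T (Nat.iter j T x) = Nat.iter (i + j) T x.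
Proof. rewrite Nat.iter_add; auto. Qed.

Lemma mu_EL {X} (M : FiniteMeasureSpace X) T (HT : measure_preserving M T) A L :
  measurable M A -> mu M (EL T A L) <= 3 * mu M A.
Proof.
  intros HA.
  assert (HE := meas_EL M T HT A L HA).
  assert (Hk : forall H, INR H * mu M (EL T A L) <= 3 * (INR (H + L) * mu M A)).
  { intros H.
    set (l := map (fun j => pre T j A) (seq 0 (H + L))).
    rewrite <- (Imu_map M T HT _ 0 H HE), <- (Imu_map M T HT _ 0 (H + L) HA).
    fold l. replace (3 * Imu M l) with (Imu M (l ++ l ++ l))
      by (rewrite !Imu_app; ring).
    apply compare.
    - apply Forall_map_meas; auto.
    - unfold l; rewrite !Forall_app; repeat split; apply Forall_map_meas; auto.
    - intros x. rewrite !cnt_app. unfold l. rewrite !cnt_map.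
      pose proof (cover (fun j => indic (EL T A L) (Nat.iter j T x))
                        (fun j => indic A (Nat.iter j T x)) L) as C.
      enough (sumN (fun j => indic (EL T A L) (Nat.iter j T x)) 0 H <=
              3 * sumN (fun j => indic A (Nat.iter j T x)) 0 (H + L))%nat by lia.
      apply C.
      + intros j; apply ind_le1.
      + intros j hj. destruct (ind_spec (EL T A L) (Nat.iter j T x)) as [[h _]|[_ h]]; [|lia].
        destruct h as [N [hN [h1 h2]]]. exists N; split; [lia|].
        unfold cntT in h2. rewrite <- (Nat.add_0_l j), <- sumN_shift.
        erewrite sumN_ext; [exact h2|]. intros i; simpl. rewrite iter_add'. reflexivity. }
  destruct (Rle_dec (mu M (EL T A L)) (3 * mu M A)) as [h|h]; auto. exfalso.
  set (d := mu M (EL T A L) - 3 * mu M A).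
  assert (Hd : 0 < d) by (unfold d; lra).
  destruct (INR_unbounded (3 * INR L * mu M A / d)) as [H HH].
  specialize (Hk H). rewrite plus_INR in Hk.
  assert (INR H * d > 3 * INR L * mu M A).
  { apply Rmult_gt_reg_r with (/ d). apply Rinv_0_lt_compat; auto.
    rewrite Rmult_assoc, Rinv_r by lra. unfold Rdiv in HH. lra. }
  unfold d in H0. lra.
Qed.

Lemma mu_Ebig {X} (M : FiniteMeasureSpace X) T (HT : measure_preserving M T) A :
  measurable M A -> measurable M (Ebig T A) /\ mu M (Ebig T A) <= 3 * mu M A.
Proof.
  intros HA. split.
  - apply measurable_bigcup; intros; apply meas_Fset; auto.
  - apply mu_bigcup_le. intros; apply meas_Fset; auto.
    intros N. eapply Rle_trans; [|apply (mu_EL M T HT A N HA)].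
    apply mu_mono; [apply meas_fu; intros; apply meas_Fset; auto|apply meas_EL; auto|].
    intros x [i [hi h]]. exists i; split; auto; lia.
Qed.

Theorem mainTheorem10 (X : Type) (M : FiniteMeasureSpace X) (T : X -> X)
  (HT : measure_preserving M T) (K : nat -> X -> Prop)
  (HK : forall n, (1 <= n)%nat -> measurable M (K n))
  (Hsum : exists l, infinite_sum (fun n => mu M (compl (K (S n)))) l) :
  exists Om : X -> Prop, full_measure M Om /\
    forall x y, Om x -> Om y ->
      exists (n : nat) (nk : nat -> nat),
        (1 <= n)%nat /\
        (forall N, exists k0, forall k, (k0 <= k)%nat -> (N <= nk k)%nat) /\
        (forall k, K n (Nat.iter (nk k) T x) /\ K n (Nat.iter (nk k) T y)).
Proof.
  destruct Hsum as [l Hl].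
  set (f := fun n => mu M (compl (K (S n)))).
  assert (Hmc : forall n, measurable M (compl (K (S n)))).
  { intros n; apply measurable_compl, HK; lia. }
  assert (Hf : forall n, 0 <= f n) by (intros; apply mu_ge0; auto).
  set (V := fun n => bigcup (fun j => Ebig T (compl (K (S (n + j)))))).
  assert (HV : forall n, measurable M (V n)).
  { intros n; apply measurable_bigcup; intros j; apply (mu_Ebig M T HT); auto. }
  assert (HmuV : forall n, mu M (V n) <= 3 * (l - sumR f n)).
  { intros n. apply mu_bigcup_le.
    - intros j; apply (mu_Ebig M T HT); auto.
    - intros N. eapply Rle_trans; [apply mu_fu_le; intros j; apply (mu_Ebig M T HT); auto|].
      eapply Rle_trans.
      + apply (sumR_le _ (fun j => 3 * f (n + j)%nat)). intros i _.
        apply (mu_Ebig M T HT); auto.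
      + rewrite sumR_scal. pose proof (partial_le f l (n + N) Hl Hf).
        rewrite sumR_add in H. lra. }
  set (Z := fun x => forall n, V n x).
  assert (HZ : measurable M Z).
  { apply (meas_ext M (compl (bigcup (fun n => compl (V n))))).
    - unfold Z, compl, bigcup; intros x; split.
      + intros h n. apply NNPP; intros h'; apply h; exists n; auto.
      + intros h [n hn]; auto.
    - apply measurable_compl, measurable_bigcup; intros; apply measurable_compl; auto. }
  assert (HmuZ : mu M Z = 0).
  { assert (h0 : 0 <= mu M Z) by (apply mu_ge0; auto).
    assert (hb : forall n, mu M Z <= 3 * (l - sumR f n)).
    { intros n. eapply Rle_trans; [|apply HmuV]. apply mu_mono; auto. }
    destruct (Rle_dec (mu M Z) 0) as [h|h]; [lra|exfalso].
    destruct (Hl (mu M Z / 3)) as [N HN]; [lra|].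
    specialize (HN N (le_n _)). unfold R_dist in HN. apply Rabs_def2 in HN.
    rewrite sumR_f_R0 in HN. specialize (hb (S N)). fold f in HN. lra. }
  exists (compl Z). split.
  { split; [apply measurable_compl; auto|]. rewrite compl_compl; auto. }
  intros x y Hx Hy.
  assert (Hgood : forall z, compl Z z -> exists n, forall j N, (1 <= N)%nat ->
             (3 * cntT T (compl (K (S (n + j)))) z N < N)%nat).
  { intros z Hz. unfold compl, Z in Hz. apply not_all_ex_not in Hz. destruct Hz as [n Hn].
    exists n. intros j N hN. apply Nat.nle_gt. intros h. apply Hn. exists j. exists N.
    split; auto. }
  destruct (Hgood x Hx) as [n1 H1]. destruct (Hgood y Hy) as [n2 H2].
  set (m := S (n1 + n2)).
  assert (Hx' : forall N, (1 <= N)%nat -> (3 * cntT T (compl (K m)) x N < N)%nat).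
  { intros N hN. specialize (H1 n2 N hN). exact H1. }
  assert (Hy' : forall N, (1 <= N)%nat -> (3 * cntT T (compl (K m)) y N < N)%nat).
  { intros N hN. specialize (H2 n1 N hN). unfold m. rewrite Nat.add_comm. exact H2. }
  assert (G : forall M0, {j | (M0 <= j)%nat /\ K m (Nat.iter j T x) /\ K m (Nat.iter j T y)}).
  { intros M0. apply constructive_indefinite_description.
    apply NNPP; intros Hno.
    set (bx := fun j => indic (compl (K m)) (Nat.iter j T x)).
    set (bY := fun j => indic (compl (K m)) (Nat.iter j T y)).
    set (N := (3 * M0 + 3)%nat).
    assert (Hb : forall j, (M0 <= j)%nat -> (1 <= bx j + bY j)%nat).
    { intros j hj. unfold bx, bY.
      destruct (ind_spec (compl (K m)) (Nat.iter j T x)) as [[_ e1]|[n1' e1]]; [lia|].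
      destruct (ind_spec (compl (K m)) (Nat.iter j T y)) as [[_ e2]|[n2' e2]]; [lia|].
      exfalso. apply Hno. exists j. unfold compl in n1', n2'.
      split; auto; split; apply NNPP; auto. }
    pose proof (sumN_ge (fun j => bx j + bY j)%nat M0 (N - M0) Hb) as S1.
    rewrite sumN_plus in S1.
    pose proof (sumN_split bx 0 M0 (N - M0)) as S2.
    pose proof (sumN_split bY 0 M0 (N - M0)) as S3.
    replace (M0 + (N - M0))%nat with N in S2, S3 by (unfold N; lia).
    simpl in S2, S3.
    assert (hN : (1 <= N)%nat) by (unfold N; lia). specialize (Hx' N hN). specialize (Hy' N hN).
    unfold cntT in Hx', Hy'. fold bx in Hx'. fold bY in Hy'.
    unfold N in *. lia. }
  exists m, (fun k => proj1_sig (G k)). split; [unfold m; lia|]. split.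
  - intros N. exists N. intros k hk. destruct (proj2_sig (G k)) as [hj _]; lia.
  - intros k. destruct (proj2_sig (G k)) as [_ hj]; exact hj.
Qed.
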